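(* Let $\varphi$ be a consistent family of foliage grafts for a nonincreasing foliage tree $\mathbf F$, and let $\mathbf H=\mathrm{fhybr}(\mathbf F,\varphi)$. Then: (a) $\mathbf H$ is nonincreasing; (b) if $\mathbf F$ and each $\mathbf G\in\varphi$ are splittable, then $\mathbf H$ is splittable; (c) if $\mathbf F$ and each $\mathbf G\in\varphi$ are locally strict, then $\mathbf H$ is locally strict; (d) if $\mathbf F$ is complete and splittable and each $\mathbf G\in\varphi$ has bounded chains, then $\mathbf H$ is complete; and if $\mathbf F$ has strict branches and is splittable and each $\mathbf G\in\varphi$ has bounded chains, then $\mathbf H$ has strict branches; (e) if $\mathbf F$ and each $\mathbf G\in\varphi$ are open in a space $X$, then $\mathbf H$ is open in the subspace $X\setminus\mathrm{loss}(\mathbf F,\varphi)$ of $X$.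
   Context: Trees: a tree is a pair $(Q,<)$ with $<$ irreflexive transitive and predecessor sets well-ordered; $\parallel$ = incomparable; $\mathrm{sons}(x)$ = immediate successors; $\max$ = maximal nodes; $0$ = least node; chain, branch (maximal chain); bounded chains: every nonempty chain has an upper bound node; $A{\downarrow}=\{v:\exists a\in A\ a\le v\}$; for an antichain $A$ and $x\in A{\downarrow}$, $\mathrm{root}(x,A)$ is the unique $r\in A$, $r\le x$. A graft for a tree $\mathcal T$ is a tree $\mathcal G$ with more than one node, least node $0_{\mathcal G}\in\mathrm{nodes}\,\mathcal T$, $\max\mathcal G\subseteq\{v\in\mathrm{nodes}\,\mathcal T:v>_{\mathcal T}0_{\mathcal G}\}$ an antichain in $\mathcal T$, and $\mathrm{impl}\,\mathcal G:=\mathrm{nodes}\,\mathcal G\setminus(\{0_{\mathcal G}\}\cup\max\mathcal G)$ disjoint from $\mathrm{nodes}\,\mathcal T$; $\mathrm{expl}(\mathcal T,\mathcal G)=\{v:v>_{\mathcal T}0_{\mathcal G}\}\setminus(\max\mathcal G){\downarrow}_{\mathcal T}$. A consistent family $\gamma$ of grafts for $\mathcal T$: members are grafts with pairwise disjoint implants and for distinct $\mathcal D,\mathcal E$: $0_{\mathcal D}\parallel_{\mathcal T}0_{\mathcal E}$ or $0_{\mathcal D}\in(\max\mathcal E){\downarrow}_{\mathcal T}$ or $0_{\mathcal E}\in(\max\mathcal D){\downarrow}_{\mathcal T}$. $\mathrm{supp}(\mathcal T,\gamma)=\mathrm{nodes}\,\mathcal T\setminus\bigcup_{\mathcal G\in\gamma}\mathrm{expl}(\mathcal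 T,\mathcal G)$. $\mathrm{hybr}(\mathcal T,\gamma)$ is the tree on $\mathrm{supp}(\mathcal T,\gamma)\cup\bigcup_{\mathcal G\in\gamma}\mathrm{impl}\,\mathcal G$ with $x<y$ iff: (b1) $x,y\in\mathrm{supp}$, $x<_{\mathcal T}y$; (b2) $x,y\in\mathrm{impl}\,\mathcal G$, $x<_{\mathcal G}y$; (b3) $x\in\mathrm{supp}$, $y\in\mathrm{impl}\,\mathcal G$, $x\le_{\mathcal T}0_{\mathcal G}$; (b4) $x\in\mathrm{impl}\,\mathcal G$, $y\in\mathrm{supp}\cap(\max\mathcal G){\downarrow}_{\mathcal T}$, $x<_{\mathcal G}\mathrm{root}_{\mathcal T}(y,\max\mathcal G)$; or (b5) $x\in\mathrm{impl}\,\mathcal D$, $y\in\mathrm{impl}\,\mathcal E$ ($\mathcal D\neq\mathcal E$), $0_{\mathcal E}\in(\max\mathcal D){\downarrow}_{\mathcal T}$, $x<_{\mathcal D}\mathrm{root}_{\mathcal T}(0_{\mathcal E},\max\mathcal D)$. Foliage trees: $\mathbf F=(\mathcal T,l)$ with $\mathcal T$ a tree (skeleton $\mathrm{skel}\,\mathbf F$) and leaves $\mathbf F_x=l(x)$; tree notions for $\mathbf F$ refer to the skeleton; $\mathrm{fruit}_{\mathbf F}(A)=\bigcap_{x\in A}\mathbf F_x$. $\mathbf F$ is nonincreasing if $x\le y\Rightarrow\mathbf F_y\subseteq\mathbf F_x$; splittable if incomparable nodes have disjoint leaves; locally strict if each non-maximal $\mathbf F_x$ is the union of the pairwise disjoint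 family $(\mathbf F_s)_{s\in\mathrm{sons}(x)}$; complete if it has a node and every branch has nonempty fruit; has strict branches if it has a node and every branch has singleton fruit; open in $X$ if all leaves are open in $X$. A foliage graft for nonincreasing $\mathbf F$ is a nonincreasing foliage tree $\mathbf G$ such that $\mathrm{skel}\,\mathbf G$ is a graft for $\mathrm{skel}\,\mathbf F$, $\mathbf G_{0_{\mathbf G}}\subseteq\mathbf F_{0_{\mathbf G}}$, and $\mathbf G_m=\mathbf F_m$ for all $m\in\max\mathbf G$; $\mathrm{cut}(\mathbf F,\mathbf G)=\mathbf F_{0_{\mathbf G}}\setminus\mathbf G_{0_{\mathbf G}}$. $\varphi$ is a consistent family of foliage grafts for $\mathbf F$ if each member is a foliage graft for $\mathbf F$, distinct members have distinct skeletons, and $\{\mathrm{skel}\,\mathbf G:\mathbf G\in\varphi\}$ is a consistent family of grafts for $\mathrm{skel}\,\mathbf F$; $\mathrm{loss}(\mathbf F,\varphi)=\bigcup_{\mathbf G\in\varphi}\mathrm{cut}(\mathbf F,\mathbf G)$; $\mathrm{supp}(\mathbf F,\varphi)=\mathrm{supp}(\mathrm{skel}\,\mathbf F,\{\mathrm{skel}\,\mathbf G:\mathbf G\in\varphi\})$. The foliage hybrid $\mathrm{fhybr}(\mathbf F,\varphi)$ is the foliage tree $\mathbf H$ with skeleton $\mathrm{hybr}(\mathrm{skel}\,\mathbf F,\{\mathrm{skel}\,\mathbf G:\mathbf G\in\varphi\})$ and leaves $\mathbf H_x=\mathbf G_x\setminus\mathrm{loss}(\mathbf F,\varphi)$ if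 $x\in\mathrm{impl}\,\mathbf G$ for some $\mathbf G\in\varphi$, and $\mathbf H_x=\mathbf F_x\setminus\mathrm{loss}(\mathbf F,\varphi)$ if $x\in\mathrm{supp}(\mathbf F,\varphi)$. *)

(* Defs.v *)
From Stdlib Require Import Classical.
Set Implicit Arguments.

(* Nodes of all trees live in a common universe type U; a tree is a pair
   (Q, <) with Q : U -> Prop its node set and < a relation on Q. *)
Record tree (U : Type) := mkTree { nodes : U -> Prop ; lt : U -> U -> Prop }.
Arguments mkTree {U}.

Section Trees.
Variable U : Type.
Implicit Types T G D E : tree U.

Definition le T (x y : U) : Prop := lt T x y \/ (x = y /\ nodes T x).

Definition incomparable T (x y : U) : Prop :=
  nodes T x /\ nodes T y /\ ~ le T x y /\ ~ le T y x.

Definition is_tree T : Prop :=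
  (forall x y, lt T x y -> nodes T x /\ nodes T y) /\
  (forall x, ~ lt T x x) /\
  (forall x y z, lt T x y -> lt T y z -> lt T x z) /\
  (forall x, nodes T x ->
     (forall a b, lt T a x -> lt T b x -> a = b \/ lt T a b \/ lt T b a) /\
     (forall S : U -> Prop, (forall s, S s -> lt T s x) -> (exists s, S s) ->
        exists m, S m /\ forall s, S s -> m = s \/ lt T m s)).

Definition is_max T (x : U) : Prop := nodes T x /\ forall y, ~ lt T x y.
Definition is_least T (x : U) : Prop := nodes T x /\ forall y, nodes T y -> le T x y.
Definition is_son T (x s : U) : Prop :=
  lt T x s /\ forall y, ~ (lt T x y /\ lt T y s).

Definition is_chain T (C : U -> Prop) : Prop :=
  (forall c, C c -> nodes T c) /\
  (forall a b, C a -> C b -> a = b \/ lt T a b \/ lt T b a).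
Definition is_branch T (C : U -> Prop) : Prop :=
  is_chain T C /\ forall C2 : U -> Prop, is_chain T C2 -> (forall c, C c -> C2 c) -> forall d, C2 d -> C d.
Definition bounded_chains T : Prop :=
  forall C, is_chain T C -> (exists c, C c) ->
    exists u, nodes T u /\ forall c, C c -> le T c u.

Definition antichain T (A : U -> Prop) : Prop :=
  forall a b, A a -> A b -> a <> b -> incomparable T a b.

Definition down T (A : U -> Prop) (v : U) : Prop := exists a, A a /\ le T a v.

Definition impl G (x : U) : Prop := nodes G x /\ ~ is_least G x /\ ~ is_max G x.

Definition is_graft T G : Prop :=
  is_tree G /\
  (exists a b, nodes G a /\ nodes G b /\ a <> b) /\
  (exists z, is_least G z /\ nodes T z /\
     (forall m, is_max G m -> nodes T m /\ lt T z m)) /\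
  antichain T (is_max G) /\
  (forall x, impl G x -> ~ nodes T x).

Definition expl T G (v : U) : Prop :=
  (exists z, is_least G z /\ lt T z v) /\ ~ down T (is_max G) v.

Definition consistent_grafts T (gamma : tree U -> Prop) : Prop :=
  (forall G, gamma G -> is_graft T G) /\
  (forall D E, gamma D -> gamma E -> D <> E -> forall x, impl D x -> ~ impl E x) /\
  (forall D E, gamma D -> gamma E -> D <> E ->
     forall zD zE, is_least D zD -> is_least E zE ->
       incomparable T zD zE \/ down T (is_max E) zD \/ down T (is_max D) zE).

Definition supp T (gamma : tree U -> Prop) (x : U) : Prop :=
  nodes T x /\ ~ exists G, gamma G /\ expl T G x.

Definition hybr T (gamma : tree U -> Prop) : tree U :=
  mkTree
    (fun x => supp T gamma x \/ exists G, gamma G /\ impl G x)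
    (fun x y =>
       (supp T gamma x /\ supp T gamma y /\ lt T x y) \/
       (exists G, gamma G /\ impl G x /\ impl G y /\ lt G x y) \/
       (exists G, gamma G /\ supp T gamma x /\ impl G y /\
                   exists z, is_least G z /\ le T x z) \/
       (exists G, gamma G /\ impl G x /\ supp T gamma y /\
                   down T (is_max G) y /\
                   exists r, is_max G r /\ le T r y /\ lt G x r) \/
       (exists D E, gamma D /\ gamma E /\ D <> E /\ impl D x /\ impl E y /\
                   exists zE, is_least E zE /\ down T (is_max D) zE /\
                   exists r, is_max D r /\ le T r zE /\ lt D x r)).
End Trees.

Record ftree (U P : Type) := mkFtree { skel : tree U ; leaf : U -> P -> Prop }.
Arguments mkFtree {U P}.

Section Foliage.
Variables U P : Type.
Implicit Types F G H : ftree U P.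

Definition fnodes F := nodes (skel F).

Definition fruit F (A : U -> Prop) (p : P) : Prop := forall x, A x -> leaf F x p.

Definition nonincreasing F : Prop :=
  forall x y, le (skel F) x y -> forall p, leaf F y p -> leaf F x p.

Definition splittable F : Prop :=
  forall x y, incomparable (skel F) x y -> forall p, ~ (leaf F x p /\ leaf F y p).

Definition locally_strict F : Prop :=
  forall x, fnodes F x -> ~ is_max (skel F) x ->
    (forall p, leaf F x p <-> exists s, is_son (skel F) x s /\ leaf F s p) /\
    (forall s s', is_son (skel F) x s -> is_son (skel F) x s' -> s <> s' ->
       forall p, ~ (leaf F s p /\ leaf F s' p)).

Definition complete F : Prop :=
  (exists x, fnodes F x) /\
  forall C, is_branch (skel F) C -> exists p, fruit F C p.

Definition strict_branches F : Prop :=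
  (exists x, fnodes F x) /\
  forall C, is_branch (skel F) C -> exists p, forall q, fruit F C q <-> q = p.

Definition is_topology (opens : (P -> Prop) -> Prop) : Prop :=
  opens (fun _ => True) /\ opens (fun _ => False) /\
  (forall S : (P -> Prop) -> Prop, (forall A, S A -> opens A) ->
     opens (fun p => exists A, S A /\ A p)) /\
  (forall A B, opens A -> opens B -> opens (fun p => A p /\ B p)).

Definition open_in (opens : (P -> Prop) -> Prop) F : Prop :=
  forall x, fnodes F x -> opens (leaf F x).

Definition open_in_subspace (opens : (P -> Prop) -> Prop) (L : P -> Prop) F : Prop :=
  forall x, fnodes F x ->
    exists O, opens O /\ forall p, leaf F x p <-> (O p /\ ~ L p).

Definition is_fgraft F G : Prop :=
  is_tree (skel G) /\ nonincreasing G /\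
  is_graft (skel F) (skel G) /\
  (forall z, is_least (skel G) z -> forall p, leaf G z p -> leaf F z p) /\
  (forall m, is_max (skel G) m -> forall p, leaf G m p <-> leaf F m p).

Definition cut F G (p : P) : Prop :=
  exists z, is_least (skel G) z /\ leaf F z p /\ ~ leaf G z p.

Definition skels (phi : ftree U P -> Prop) (T : tree U) : Prop :=
  exists G, phi G /\ skel G = T.

Definition consistent_fgrafts F (phi : ftree U P -> Prop) : Prop :=
  (forall G, phi G -> is_fgraft F G) /\
  (forall G1 G2, phi G1 -> phi G2 -> G1 <> G2 -> skel G1 <> skel G2) /\
  consistent_grafts (skel F) (skels phi).

Definition loss F (phi : ftree U P -> Prop) (p : P) : Prop :=
  exists G, phi G /\ cut F G p.

Definition fsupp F (phi : ftree U P -> Prop) : U -> Prop :=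
  supp (skel F) (skels phi).

Definition fhybr F (phi : ftree U P -> Prop) : ftree U P :=
  mkFtree (hybr (skel F) (skels phi))
    (fun x p =>
       ((exists G, phi G /\ impl (skel G) x /\ leaf G x p) \/
        (fsupp F phi x /\ leaf F x p)) /\ ~ loss F phi p).
End Foliage.

(* Main.v *)
Require Import Defs.
From Stdlib Require Import Classical.
Set Implicit Arguments.
Unset Strict Implicit.


Section TreeBasics.
Variable U : Type.
Variable G : tree U.
Hypothesis HG : is_tree G.

Lemma t_nodes x y : lt G x y -> nodes G x /\ nodes G y.
Proof. destruct HG as [h _]. auto. Qed.
Lemma t_irr x : ~ lt G x x.
Proof. destruct HG as [_ [h _]]. auto. Qed.
Lemma t_trans x y z : lt G x y -> lt G y z -> lt G x z.
Proof. destruct HG as [_ [_ [h _]]]. eauto. Qed.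
Lemma t_pred x a b : lt G a x -> lt G b x -> a = b \/ lt G a b \/ lt G b a.
Proof.
  intros Ha Hb. destruct HG as [_ [_ [_ h]]].
  destruct (h x (proj2 (t_nodes Ha))) as [h1 _]. auto.
Qed.
Lemma t_le_lt x y z : le G x y -> lt G y z -> lt G x z.
Proof. intros [h|[-> _]] h2; [eapply t_trans; eauto| auto]. Qed.
Lemma t_lt_le x y z : lt G x y -> le G y z -> lt G x z.
Proof. intros h [h2|[<- _]]; [eapply t_trans; eauto| auto]. Qed.
Lemma t_le_le x y z : le G x y -> le G y z -> le G x z.
Proof. intros [h|[-> _]] h2; auto. left. eapply t_lt_le; eauto. Qed.
Lemma t_le_of_lt x y : lt G x y -> le G x y.
Proof. left; auto. Qed.
Lemma t_le_refl x : nodes G x -> le G x x.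
Proof. right; auto. Qed.
Lemma t_le_nodes_l x y : le G x y -> nodes G x.
Proof. intros [h|[_ h]]; [apply (t_nodes h)|auto]. Qed.
Lemma t_le_nodes_r x y : le G x y -> nodes G y.
Proof. intros [h|[-> h]]; [apply (t_nodes h)|auto]. Qed.
Lemma t_lepred x a b : le G a x -> le G b x -> a = b \/ lt G a b \/ lt G b a.
Proof.
  intros [Ha|[-> _]] [Hb|[-> _]]; auto.
  apply t_pred with x; auto.
Qed.
Lemma t_le_lt_irr x y : le G x y -> lt G y x -> False.
Proof. intros h1 h2. apply (t_irr (t_le_lt h1 h2)). Qed.
Lemma least_uniq z z' : is_least G z -> is_least G z' -> z = z'.
Proof.
  intros [n1 h1] [n2 h2].
  destruct (h1 z' n2) as [l1|[e _]]; auto.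
  destruct (h2 z n1) as [l2|[e _]]; auto.
  exfalso; apply (t_irr (t_trans l1 l2)).
Qed.
Lemma least_lt z n : is_least G z -> nodes G n -> n <> z -> lt G z n.
Proof. intros [_ h] hn ne. destruct (h n hn) as [l|[e _]]; auto. congruence. Qed.
Lemma least_le z n : is_least G z -> nodes G n -> le G z n.
Proof. intros [_ h] hn. auto. Qed.
Lemma least_not_above z n : is_least G z -> lt G n z -> False.
Proof. intros hz hl. apply (t_le_lt_irr (least_le hz (proj1 (t_nodes hl))) hl). Qed.
Lemma max_not_lt r y : is_max G r -> ~ lt G r y.
Proof. intros [_ h]. auto. Qed.
Lemma comparable_or x y : nodes G x -> nodes G y -> ~ incomparable G x y -> le G x y \/ le G y x.
Proof.
  intros hx hy h. apply NNPP. intro c. apply h. unfold incomparable. tauto.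
Qed.
End TreeBasics.


Section Hyb.
Variable U : Type.
Variable T : tree U.
Variable gamma : tree U -> Prop.
Hypothesis HT : is_tree T.
Hypothesis HC : consistent_grafts T gamma.
Hypothesis HB : forall E, gamma E -> bounded_chains E.
Set Default Proof Using "Type HT HC".

Notation H := (hybr T gamma).
Notation hlt := (lt (hybr T gamma)).
Notation sp := (supp T gamma).

Lemma gr E : gamma E -> is_graft T E.
Proof. destruct HC as [h _]; auto. Qed.
Lemma gtree E : gamma E -> is_tree E.
Proof. intro h; apply (gr h). Qed.
Lemma groot E : gamma E -> exists z, is_least E z /\ nodes T z.
Proof. intro h. destruct (gr h) as [_ [_ [[z [hz [hn _]]] _]]]. eauto. Qed.
Lemma groot_T E z : gamma E -> is_least E z -> nodes T z.
Proof.
  intros h hz. destruct (gr h) as [ht [_ [[z' [hz' [hn _]]] _]]].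
  rewrite (least_uniq ht hz hz'). auto.
Qed.
Lemma gmax_above E z m : gamma E -> is_least E z -> is_max E m -> lt T z m.
Proof.
  intros h hz hm. destruct (gr h) as [ht [_ [[z' [hz' [hn hh]]] _]]].
  rewrite (least_uniq ht hz hz'). apply hh; auto.
Qed.
Lemma gmax_T E m : gamma E -> is_max E m -> nodes T m.
Proof.
  intros h hm. destruct (gr h) as [ht [_ [[z' [hz' [hn hh]]] _]]]. apply hh; auto.
Qed.
Lemma gimpl_notT E x : gamma E -> impl E x -> ~ nodes T x.
Proof. intros h. destruct (gr h) as [_ [_ [_ [_ hh]]]]. auto. Qed.
Lemma ganti E a b : gamma E -> is_max E a -> is_max E b -> le T a b -> a = b.
Proof.
  intros h ha hb hl. destruct (gr h) as [_ [_ [_ [ha' _]]]].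
  apply NNPP; intro ne. destruct (ha' a b ha hb ne) as [_ [_ [c _]]]. auto.
Qed.
Lemma ganti_lt E a b : gamma E -> is_max E a -> is_max E b -> lt T a b -> False.
Proof.
  intros h ha hb hl. pose proof (ganti h ha hb (t_le_of_lt hl)). subst.
  apply (t_irr HT hl).
Qed.
Lemma gother E z : gamma E -> is_least E z -> exists n, lt E z n.
Proof.
  intros h hz. destruct (gr h) as [ht [[a [b [na [nb ne]]]] _]].
  destruct (classic (a = z)) as [e|e].
  - subst. exists b. apply (least_lt hz nb). auto.
  - exists a. apply (least_lt hz na e).
Qed.
Lemma impl_nodesG (E : tree U) (x : U) : impl E x -> nodes E x.
Proof. intros [h _]; auto. Qed.
Lemma impl_lt_root E z x : gamma E -> is_least E z -> impl E x -> lt E z x.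
Proof.
  intros h hz [hn [hl _]]. apply (least_lt hz hn). intro e; subst; auto.
Qed.
Lemma impl_uniq D E x : gamma D -> gamma E -> impl D x -> impl E x -> D = E.
Proof.
  intros hD hE h1 h2. apply NNPP; intro ne.
  destruct HC as [_ [h _]]. apply (h D E hD hE ne x h1 h2).
Qed.
Lemma consist D E zD zE : gamma D -> gamma E -> D <> E -> is_least D zD -> is_least E zE ->
  incomparable T zD zE \/ down T (is_max E) zD \/ down T (is_max D) zE.
Proof. intros. destruct HC as [_ [_ h]]. auto. Qed.
Lemma root_uniq D E z : gamma D -> gamma E -> is_least D z -> is_least E z -> D = E.
Proof.
  intros hD hE h1 h2. apply NNPP; intro ne.
  destruct (consist hD hE ne h1 h2) as [[_ [_ [c _]]]|[[a [ha hl]]|[a [ha hl]]]].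
  - apply c. apply t_le_refl. apply (groot_T hD h1).
  - apply (t_le_lt_irr HT hl (gmax_above hE h2 ha)).
  - apply (t_le_lt_irr HT hl (gmax_above hD h1 ha)).
Qed.
Lemma supp_nodes x : sp x -> nodes T x.
Proof. intros [h _]; auto. Qed.
Lemma impl_not_supp E x : gamma E -> impl E x -> ~ sp x.
Proof. intros h hi hs. apply (gimpl_notT h hi (supp_nodes hs)). Qed.
Lemma root_supp E z : gamma E -> is_least E z -> sp z.
Proof.
  intros hE hz. split; [apply (groot_T hE hz)|].
  intros [D [hD [[zD [hzD hl]] nd]]].
  destruct (classic (D = E)) as [e|ne].
  - subst. rewrite (least_uniq (gtree hD) hz hzD) in hl. apply (t_irr HT hl).
  - destruct (consist hD hE ne hzD hz) as [[_ [_ [c _]]]|[[a [ha hl2]]|[a [ha hl2]]]].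
    + apply c. left; auto.
    + apply (t_irr HT (t_trans HT (t_lt_le HT (gmax_above hE hz ha) hl2) hl)).
    + apply nd. exists a; auto.
Qed.
Lemma max_supp E r : gamma E -> is_max E r -> sp r.
Proof.
  intros hE hr. split; [apply (gmax_T hE hr)|].
  intros [D [hD [[zD [hzD hl]] nd]]].
  destruct (groot hE) as [zE [hzE _]].
  destruct (classic (D = E)) as [e|ne].
  - subst. apply nd. exists r. split; auto. apply t_le_refl. apply (gmax_T hE hr).
  - destruct (consist hD hE ne hzD hzE) as [[_ [_ [c1 c2]]]|[[a [ha hl2]]|[a [ha hl2]]]].
    + pose proof (gmax_above hE hzE hr) as h2.
      destruct (t_pred HT hl h2) as [e|[l|l]].
      * apply c1. subst. apply t_le_refl. apply (groot_T hD hzD).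
      * apply c1; left; auto.
      * apply c2; left; auto.
    + apply (ganti_lt hE ha hr (t_le_lt HT hl2 hl)).
    + apply nd. exists a. split; auto. apply (t_le_le HT hl2).
      left. apply (gmax_above hE hzE hr).
Qed.
Lemma down_of_supp c G z : sp c -> gamma G -> is_least G z -> lt T z c ->
  exists r, is_max G r /\ le T r c.
Proof.
  intros [hn hs] hG hz hl. apply NNPP; intro c1. apply hs. exists G. split; auto.
  split. eauto. intros [r [h1 h2]]. apply c1; eauto.
Qed.
Lemma least_le_G E z x : gamma E -> is_least E z -> nodes E x -> le E z x.
Proof. intros h hz hx. apply (least_le hz hx). Qed.

Lemma hnode_cases x : nodes H x -> sp x \/ exists E, gamma E /\ impl E x.
Proof. auto. Qed.
Lemma hnode_supp x : sp x -> nodes H x.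
Proof. unfold hybr; simpl; auto. Qed.
Lemma hnode_impl E x : gamma E -> impl E x -> nodes H x.
Proof. unfold hybr; simpl; eauto. Qed.

Lemma mk_supp1 x y : sp x -> sp y -> lt T x y -> hlt x y.
Proof. unfold hybr; simpl; auto. Qed.
Lemma mk_supp2 G x y r : gamma G -> impl G x -> sp y -> is_max G r -> le T r y -> lt G x r -> hlt x y.
Proof.
  intros. unfold hybr; simpl. right; right; right; left. exists G.
  split; [auto|]. split; [auto|]. split; [auto|]. split. exists r; auto. exists r; auto.
Qed.
Lemma mk_impl1 E x y : gamma E -> impl E x -> impl E y -> lt E x y -> hlt x y.
Proof. intros. unfold hybr; simpl. right; left. eauto 6. Qed.
Lemma mk_impl2 E x y z : gamma E -> impl E y -> is_least E z -> sp x -> le T x z -> hlt x y.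
Proof. intros. unfold hybr; simpl. right; right; left. exists E; split; [auto|]. split; [auto|]. split; eauto. Qed.
Lemma mk_impl3 E D x y z r : gamma E -> impl E y -> is_least E z -> gamma D -> impl D x ->
  is_max D r -> le T r z -> lt D x r -> hlt x y.
Proof.
  intros. unfold hybr; simpl. right; right; right; right.
  assert (D <> E).
  { intro e; subst. apply (t_le_lt_irr HT H5 (gmax_above H H1 H4)). }
  exists D, E. do 5 (split; [auto|]). exists z; split; auto.
  split. exists r; auto. exists r; auto.
Qed.

Lemma CH_supp x y : sp y -> hlt x y ->
  (sp x /\ lt T x y) \/
  (exists G, gamma G /\ impl G x /\ exists r, is_max G r /\ le T r y /\ lt G x r).
Proof.
  intros hy h.
  destruct h as [[h1 [_ h3]]|[[G [hG [_ [hi _]]]]|[[G [hG [_ [hi _]]]]|[[G [hG [hi [_ [_ hr]]]]]|[D [E [_ [hE [_ [_ [hi _]]]]]]]]]]].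
  - auto.
  - destruct (impl_not_supp hG hi hy).
  - destruct (impl_not_supp hG hi hy).
  - right; eauto.
  - destruct (impl_not_supp hE hi hy).
Qed.

Lemma CH_impl x y E z : gamma E -> impl E y -> is_least E z -> hlt x y ->
  (impl E x /\ lt E x y) \/ (sp x /\ le T x z) \/
  (exists D, gamma D /\ impl D x /\ exists r, is_max D r /\ le T r z /\ lt D x r).
Proof.
  intros hE hy hz h.
  destruct h as [[_ [h2 _]]|[[G [hG [h1 [h2 h3]]]]|[[G [hG [h1 [h2 [z' [hz' hl]]]]]]|[[G [hG [_ [h2 _]]]]|[D [E' [hD [hE' [_ [hx [hy' [zE [hzE [_ [r hr]]]]]]]]]]]]]]].
  - destruct (impl_not_supp hE hy h2).
  - rewrite (impl_uniq hG hE h2 hy) in *. auto.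
  - rewrite (impl_uniq hG hE h2 hy) in *. rewrite (least_uniq (gtree hE) hz' hz) in hl. auto.
  - destruct (impl_not_supp hE hy h2).
  - rewrite (impl_uniq hE' hE hy' hy) in *. rewrite (least_uniq (gtree hE) hzE hz) in hr.
    right; right. exists D; split; auto. split; auto. exists r. tauto.
Qed.

Lemma sp_sp_lt x y : sp x -> sp y -> hlt x y -> lt T x y.
Proof.
  intros hx hy h. destruct (CH_supp hy h) as [[_ l]|[G [hG [hi _]]]]; auto.
  destruct (impl_not_supp hG hi hx).
Qed.

Lemma hlt_same G a b : gamma G -> impl G a -> impl G b -> hlt a b -> lt G a b.
Proof.
  intros hG ha hb h. destruct (groot hG) as [z [hz _]].
  destruct (CH_impl hG hb hz h) as [[_ l]|[[hs _]|[D [hD [hi [r [hr [hl _]]]]]]]]; auto.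
  - destruct (impl_not_supp hG ha hs).
  - rewrite (impl_uniq hD hG hi ha) in hr.
    exfalso. apply (t_le_lt_irr HT hl (gmax_above hG hz hr)).
Qed.

Lemma g_to_h G z w : gamma G -> impl G z -> lt G z w -> impl G w \/ is_max G w -> hlt z w.
Proof.
  intros hG hz hl [hw|hw].
  - apply (mk_impl1 hG hz hw hl).
  - apply (mk_supp2 hG hz (max_supp hG hw) hw); auto.
    apply t_le_refl. apply (gmax_T hG hw).
Qed.

Lemma le_root x E z y : gamma E -> impl E y -> is_least E z ->
  ((sp x /\ le T x z) \/
  (exists D, gamma D /\ impl D x /\ exists r, is_max D r /\ le T r z /\ lt D x r)) ->
  x = z \/ hlt x z.
Proof.
  intros hE hy hz [[hs [l|[e _]]]|[D [hD [hi [r [hr [hl l]]]]]]]; auto.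
  - right. apply mk_supp1; auto. apply (root_supp hE hz).
  - right. apply (mk_supp2 hD hi (root_supp hE hz) hr hl l).
Qed.

Lemma hlt_r x y : hlt x y -> sp y \/ exists E, gamma E /\ impl E y.
Proof.
  intros h.
  destruct h as [[_ [h2 _]]|[[G [hG [h1 [h2 h3]]]]|[[G [hG [h1 [h2 _]]]]|[[G [hG [_ [h2 _]]]]|[D [E' [hD [hE' [_ [hx [hy' _]]]]]]]]]]]; eauto.
Qed.
Lemma hlt_l x y : hlt x y -> sp x \/ exists E, gamma E /\ impl E x.
Proof.
  intros h.
  destruct h as [[h2 _]|[[G [hG [h1 [h2 h3]]]]|[[G [hG [h1 [h2 _]]]]|[[G [hG [h2 _]]]|[D [E' [hD [hE' [_ [hx [hy' _]]]]]]]]]]]; eauto.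
Qed.

Lemma htrans_supp x y w : sp w -> hlt x y -> hlt y w -> hlt x w.
Proof.
  intros hw h1 h2.
  destruct (CH_supp hw h2) as [[hy l]|[G [hG [hi [r [hr [hl l]]]]]]].
  - destruct (CH_supp hy h1) as [[hx l2]|[D [hD [hi2 [r2 [hr2 [hl2 l2]]]]]]].
    + apply mk_supp1; auto. eapply t_trans; eauto.
    + apply (mk_supp2 hD hi2 hw hr2); auto. eapply t_le_le; eauto. left; auto.
  - destruct (groot hG) as [z [hz _]].
    destruct (CH_impl hG hi hz h1) as [[hx l2]|[[hx l2]|[D [hD [hi2 [r2 [hr2 [hl2 l2]]]]]]]].
    + apply (mk_supp2 hG hx hw hr hl). eapply t_trans; eauto. apply (gtree hG).
    + apply mk_supp1; auto. eapply t_le_lt; eauto. eapply t_lt_le; eauto.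
      apply (gmax_above hG hz hr).
    + apply (mk_supp2 hD hi2 hw hr2); auto. left. eapply t_le_lt; eauto.
      eapply t_lt_le; eauto. apply (gmax_above hG hz hr).
Qed.

Lemma htrans x y w : hlt x y -> hlt y w -> hlt x w.
Proof.
  intros h1 h2. destruct (hlt_r h2) as [hw|[E [hE hiw]]].
  - apply (htrans_supp hw h1 h2).
  - destruct (groot hE) as [z [hz _]].
    destruct (CH_impl hE hiw hz h2) as [[hy l]|[[hy l]|[D [hD [hi [r [hr [hl l]]]]]]]].
    + destruct (CH_impl hE hy hz h1) as [[hx l2]|[[hx l2]|[D [hD [hi2 [r2 [hr2 [hl2 l2]]]]]]]].
      * apply (mk_impl1 hE hx hiw). eapply t_trans; eauto. apply (gtree hE).
      * apply (mk_impl2 hE hiw hz hx l2).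
      * apply (mk_impl3 hE hiw hz hD hi2 hr2 hl2 l2).
    + destruct (CH_supp hy h1) as [[hx l2]|[D [hD [hi2 [r2 [hr2 [hl2 l2]]]]]]].
      * apply (mk_impl2 hE hiw hz hx). left. eapply t_lt_le; eauto.
      * apply (mk_impl3 hE hiw hz hD hi2 hr2); auto. eapply t_le_le; eauto.
    + destruct (groot hD) as [zD [hzD _]].
      destruct (CH_impl hD hi hzD h1) as [[hx l2]|[[hx l2]|[D' [hD' [hi2 [r2 [hr2 [hl2 l2]]]]]]]].
      * apply (mk_impl3 hE hiw hz hD hx hr hl). eapply t_trans; eauto. apply (gtree hD).
      * apply (mk_impl2 hE hiw hz hx). left. eapply t_le_lt; eauto. eapply t_lt_le; eauto.
        apply (gmax_above hD hzD hr).
      * apply (mk_impl3 hE hiw hz hD' hi2 hr2); auto. left. eapply t_le_lt; eauto.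
        eapply t_lt_le; eauto. apply (gmax_above hD hzD hr).
Qed.


Lemma hpred_supp_aux a b y : sp y -> sp a -> lt T a y ->
  forall G, gamma G -> impl G b -> forall r, is_max G r -> le T r y -> lt G b r ->
  hlt a b \/ hlt b a.
Proof.
  intros hy ha l G hG hb r hr hl l2.
  destruct (groot hG) as [z [hz _]].
  pose proof (gmax_above hG hz hr) as zr.
  destruct (t_lepred HT (t_le_of_lt l) (t_le_of_lt (t_lt_le HT zr hl))) as [e|[l3|l3]].
  - left. apply (mk_impl2 hG hb hz ha). subst. apply t_le_refl; auto. apply (supp_nodes ha).
  - left. apply (mk_impl2 hG hb hz ha). left; auto.
  - right. destruct (down_of_supp ha hG hz l3) as [r' [hr' hl']].
    assert (r' = r).
    { destruct (t_lepred HT (t_le_le HT hl' (t_le_of_lt l)) hl) as [e|[l4|l4]]; auto.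
      - destruct (ganti_lt hG hr' hr l4).
      - destruct (ganti_lt hG hr hr' l4). }
    subst. apply (mk_supp2 hG hb ha hr hl' l2).
Qed.

Lemma hpred_supp a b y : sp y -> hlt a y -> hlt b y -> a = b \/ hlt a b \/ hlt b a.
Proof.
  intros hy h1 h2.
  destruct (CH_supp hy h1) as [[ha l]|[G [hG [hia [r [hr [hl l]]]]]]];
  destruct (CH_supp hy h2) as [[hb l2]|[G2 [hG2 [hib [r2 [hr2 [hl2 l2]]]]]]].
  - destruct (t_pred HT l l2) as [e|[l3|l3]]; auto.
    + right; left; apply mk_supp1; auto.
    + right; right; apply mk_supp1; auto.
  - right. apply (hpred_supp_aux hy ha l hG2 hib hr2 hl2 l2).
  - right. destruct (hpred_supp_aux hy hb l2 hG hia hr hl l); auto.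
  - destruct (classic (G = G2)) as [e|ne].
    + subst. assert (r = r2).
      { destruct (t_lepred HT hl hl2) as [e|[l4|l4]]; auto.
        - destruct (ganti_lt hG2 hr hr2 l4).
        - destruct (ganti_lt hG2 hr2 hr l4). }
      subst. destruct (t_pred (gtree hG2) l l2) as [e|[l3|l3]]; auto.
      * right; left. apply (mk_impl1 hG2 hia hib l3).
      * right; right. apply (mk_impl1 hG2 hib hia l3).
    + destruct (groot hG) as [z [hz _]]. destruct (groot hG2) as [z2 [hz2 _]].
      pose proof (gmax_above hG hz hr) as zr. pose proof (gmax_above hG2 hz2 hr2) as zr2.
      destruct (consist hG hG2 ne hz hz2) as [[_ [_ [c1 c2]]]|[[a' [ha' hl']]|[a' [ha' hl']]]].
      * exfalso. destruct (t_lepred HT (t_le_of_lt (t_lt_le HT zr hl)) (t_le_of_lt (t_lt_le HT zr2 hl2))) as [e|[l4|l4]].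
        -- subst. apply c1. apply t_le_refl. apply (groot_T hG hz).
        -- apply c1; left; auto.
        -- apply c2; left; auto.
      *
        assert (a' = r2).
        { destruct (t_lepred HT (t_le_le HT hl' (t_le_of_lt (t_lt_le HT zr hl))) hl2) as [e|[l4|l4]]; auto.
          - destruct (ganti_lt hG2 ha' hr2 l4).
          - destruct (ganti_lt hG2 hr2 ha' l4). }
        subst. right; right. apply (mk_impl3 hG hia hz hG2 hib hr2 hl' l2).
      * assert (a' = r).
        { destruct (t_lepred HT (t_le_le HT hl' (t_le_of_lt (t_lt_le HT zr2 hl2))) hl) as [e|[l4|l4]]; auto.
          - destruct (ganti_lt hG ha' hr l4).
          - destruct (ganti_lt hG hr ha' l4). }
        subst. right; left. apply (mk_impl3 hG2 hib hz2 hG hia hr hl' l).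
Qed.

Lemma hpred a b y : hlt a y -> hlt b y -> a = b \/ hlt a b \/ hlt b a.
Proof.
  intros h1 h2. destruct (hlt_r h1) as [hy|[E [hE hiy]]].
  - apply (hpred_supp hy h1 h2).
  - destruct (groot hE) as [z [hz _]]. pose proof (root_supp hE hz) as zs.
    destruct (CH_impl hE hiy hz h1) as [[ha l]|ra];
    destruct (CH_impl hE hiy hz h2) as [[hb l2]|rb].
    + destruct (t_pred (gtree hE) l l2) as [e|[l3|l3]]; auto.
      * right; left; apply (mk_impl1 hE ha hb l3).
      * right; right; apply (mk_impl1 hE hb ha l3).
    + right; right. destruct (le_root hE hiy hz rb) as [e|l3].
      * subst. apply (mk_impl2 hE ha hz zs). apply t_le_refl. apply (supp_nodes zs).
      * apply (htrans l3). apply (mk_impl2 hE ha hz zs). apply t_le_refl. apply (supp_nodes zs).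
    + right; left. destruct (le_root hE hiy hz ra) as [e|l3].
      * subst. apply (mk_impl2 hE hb hz zs). apply t_le_refl. apply (supp_nodes zs).
      * apply (htrans l3). apply (mk_impl2 hE hb hz zs). apply t_le_refl. apply (supp_nodes zs).
    + destruct (le_root hE hiy hz ra) as [e|l3]; destruct (le_root hE hiy hz rb) as [e2|l4]; subst; auto.
      apply (hpred_supp zs l3 l4).
Qed.

Lemma br_cmp C a b : is_branch H C -> C a -> C b -> a = b \/ hlt a b \/ hlt b a.
Proof. intros [[_ h] _]. auto. Qed.
Lemma br_nodes C a : is_branch H C -> C a -> nodes H a.
Proof. intros [[h _] _]. auto. Qed.

Lemma branch_mem C h : is_branch H C -> nodes H h ->
  (forall c, C c -> c = h \/ hlt c h \/ hlt h c) -> C h.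
Proof.
  intros [[hn hc] hmax] hh hcmp.
  apply (hmax (fun x => C x \/ x = h)); auto.
  split.
  - intros c [hc1|e]; [auto|subst; auto].
  - intros a b [ha|ea] [hb|eb]; subst; auto.
    all: try (destruct (hcmp b hb) as [e|[l|l]]; auto).
    all: try (left; auto).
Qed.

Lemma K1 C c G : is_branch H C -> C c -> gamma G -> impl G c ->
  exists r, is_max G r /\ lt G c r /\ C r.
Proof using HT HC HB.
  intros hbr hcC hG hic.
  pose proof (gtree hG) as tG.
  destruct (groot hG) as [zG [hzG _]].
  destruct (classic (exists y, C y /\ hlt c y /\ ~ impl G y)) as [[y [hyC [hcy hny]]]|nA].
  -
    assert (exists r, is_max G r /\ lt G c r /\ (r = y \/ hlt r y)) as [r [hr [l hry]]].
    { destruct (hlt_r hcy) as [hy|[E [hE hiy]]].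
      - destruct (CH_supp hy hcy) as [[hs _]|[D [hD [hi [r [hr [hl l]]]]]]].
        + destruct (impl_not_supp hG hic hs).
        + rewrite (impl_uniq hD hG hi hic) in hr, l. exists r. split; auto. split; auto.
          destruct hl as [hl|[e _]]; auto. right. apply mk_supp1; auto.
          apply (max_supp hG hr).
      - destruct (groot hE) as [zE [hzE _]].
        destruct (CH_impl hE hiy hzE hcy) as [[hi l]|[[hs _]|[D [hD [hi [r [hr [hl l]]]]]]]].
        + rewrite (impl_uniq hE hG hi hic) in hiy. contradiction.
        + destruct (impl_not_supp hG hic hs).
        + rewrite (impl_uniq hD hG hi hic) in hr, l. exists r. split; auto. split; auto.
          right. apply (mk_impl2 hE hiy hzE (max_supp hG hr) hl). }
    exists r. split; auto. split; auto.
    assert (hcr : hlt c r) by (apply (g_to_h hG hic l); auto).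
    apply (branch_mem hbr (hnode_supp (max_supp hG hr))).
    intros w hw. destruct (br_cmp hbr hw hyC) as [e|[l2|l2]].
    + subst. destruct hry as [e|l3]; auto.
    + destruct hry as [e|l3].
      * subst; auto.
      * destruct (hpred l2 l3) as [e|[l4|l4]]; auto.
    + right; right. destruct hry as [e|l3]; [subst; auto|]. apply (htrans l3 l2).
  - exfalso.
    assert (allG : forall y, C y -> hlt c y -> impl G y /\ lt G c y).
    { intros y hy l. assert (iy : impl G y) by (apply NNPP; intro; apply nA; eauto).
      split; auto. apply (hlt_same hG hic iy l). }
    set (X := fun y => C y /\ (y = c \/ hlt c y)).
    assert (XG : forall y, X y -> impl G y).
    { intros y [hy [e|l]]; [subst; auto| apply (allG y hy l)]. }
    assert (chX : is_chain G X).
    { split.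
      - intros y hy. apply impl_nodesG. apply XG; auto.
      - intros a b ha hb. destruct (br_cmp hbr (proj1 ha) (proj1 hb)) as [e|[l|l]]; auto.
        + right; left. apply (hlt_same hG (XG a ha) (XG b hb) l).
        + right; right. apply (hlt_same hG (XG b hb) (XG a ha) l). }
    destruct (HB hG chX (ex_intro _ c (conj hcC (or_introl eq_refl)))) as [u [hu hub]].
    assert (exists w, (impl G w \/ is_max G w) /\ forall y, X y -> lt G y w) as [w [hw hwub]].
    { destruct (classic (impl G u)) as [iu|niu].
      - destruct iu as [_ [_ nm]].
        assert (exists v, lt G u v) as [v lv].
        { apply NNPP; intro nv. apply nm. split; auto. intros v lv. apply nv; eauto. }
        exists v. split.
        + destruct (classic (is_max G v)); auto. left. split; [apply (t_nodes tG lv)|].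
          split; auto. intro hl. apply (least_not_above tG hl
          (t_le_lt tG (hub c (conj hcC (or_introl eq_refl))) lv)).
        + intros y hy. apply (t_le_lt tG (hub y hy) lv).
      - assert (is_max G u).
        { apply NNPP; intro nm. apply niu. split; auto. split; auto.
          intro hl. pose proof (hub c (conj hcC (or_introl eq_refl))) as hcu.
          destruct hcu as [hcu|[e _]].
          + apply (least_not_above tG hl hcu).
          + subst. destruct hic as [_ [hh _]]. auto. }
        exists u. split; auto. intros y hy. destruct (hub y hy) as [l|[e _]]; auto.
        subst. destruct (XG u hy) as [_ [_ hh]]. contradiction. }
    assert (hcw : lt G c w) by (apply hwub; split; auto).
    assert (hcwh : hlt c w) by (apply (g_to_h hG hic hcw hw)).
    assert (Cw : C w).
    { apply (branch_mem hbr).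
      - destruct hw as [hw|hw]. apply (hnode_impl hG hw). apply hnode_supp. apply (max_supp hG hw).
      - intros z hz. destruct (br_cmp hbr hz hcC) as [e|[l|l]].
        + subst; auto.
        + right; left. apply (htrans l hcwh).
        + right; left. assert (xz : X z) by (split; auto).
          apply (g_to_h hG (XG z xz) (hwub z xz) hw). }
    destruct (allG w Cw hcwh) as [iw _].
    apply (t_irr tG (hwub w (conj Cw (or_intror hcwh)))).
Qed.


Lemma K3 C z0 E : is_branch H C -> C z0 -> gamma E -> is_least E z0 ->
  exists c', C c' /\ sp c' /\ lt T z0 c'.
Proof using HT HC HB.
  intros hbr hz hE hzE.
  pose proof (root_supp hE hzE) as zs.
  assert (exists y, C y /\ hlt z0 y) as [y [hy l]].
  { apply NNPP; intro nY.
    destruct (gother hE hzE) as [n ln].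
    assert (hnn : nodes E n) by (apply (t_nodes (gtree hE) ln)).
    assert (hn : impl E n \/ is_max E n).
    { destruct (classic (is_max E n)); auto. left. split; auto. split; auto.
      intro hl. apply (least_not_above (gtree hE) hl ln). }
    assert (hzn : hlt z0 n).
    { destruct hn as [hn|hn].
      - apply (mk_impl2 hE hn hzE zs). apply t_le_refl. apply (supp_nodes zs).
      - apply mk_supp1; auto. apply (max_supp hE hn). apply (gmax_above hE hzE hn). }
    apply nY. exists n. split; auto.
    apply (branch_mem hbr).
    - destruct hn as [hn|hn]. apply (hnode_impl hE hn). apply hnode_supp. apply (max_supp hE hn).
    - intros w hw. destruct (br_cmp hbr hw hz) as [e|[l|l]].
      + subst; auto.
      + right; left. apply (htrans l hzn).
      + exfalso; apply nY; eauto. }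
  destruct (hlt_r l) as [ys|[E' [hE' hiy]]].
  - exists y. split; auto. split; auto. apply (sp_sp_lt zs ys l).
  - destruct (K1 hbr hy hE' hiy) as [r [hr [lr Cr]]].
    assert (hyr : hlt y r) by (apply (g_to_h hE' hiy lr); auto).
    pose proof (max_supp hE' hr) as rs.
    exists r. split; auto. split; auto. apply (sp_sp_lt zs rs (htrans l hyr)).
Qed.

Definition Bset (C : U -> Prop) (t : U) : Prop := exists c, C c /\ sp c /\ le T t c.

Lemma lsub (B : U -> Prop) d : (forall s t, B t -> lt T s t -> B s) -> nodes T d ->
  (forall b, B b -> lt T b d) ->
  exists t0, nodes T t0 /\ (forall b, B b -> lt T b t0) /\ (forall s, lt T s t0 -> B s).
Proof.
  intros hdc hd hbd.
  assert (key : forall t0, (forall b, B b -> lt T b t0) ->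
     (forall s, lt T s t0 -> (forall b, B b -> lt T b s) -> False) -> forall s, lt T s t0 -> B s).
  { intros t0 hb0 hmin s ls. apply NNPP; intro nb.
    apply (hmin s ls). intros b hb. destruct (t_pred HT (hb0 b hb) ls) as [e|[l|l]]; auto.
    + subst; contradiction.
    + exfalso; apply nb. apply (hdc s b hb l). }
  set (S := fun s => lt T s d /\ forall b, B b -> lt T b s).
  destruct (classic (exists s, S s)) as [ex|nex].
  - destruct HT as [_ [_ [_ hw]]]. destruct (hw d hd) as [_ wo].
    destruct (wo S (fun s hs => proj1 hs) ex) as [m [[lm ubm] hm]].
    exists m. split; [apply (t_nodes HT lm)|]. split; auto.
    apply key; auto. intros s ls ubs.
    destruct (hm s (conj (t_trans HT ls lm) ubs)) as [e|l].
    + subst; apply (t_irr HT ls).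
    + apply (t_irr HT (t_trans HT ls l)).
  - exists d. split; auto. split; auto. apply key; auto.
    intros s ls ubs. apply nex. exists s. split; auto.
Qed.

Lemma Bdown C s t : Bset C t -> lt T s t -> Bset C s.
Proof. intros [c [hc [hs l]]] l2. exists c. split; auto. split; auto. left. apply (t_lt_le HT l2 l). Qed.

Lemma C_nonempty C h : is_branch H C -> nodes H h -> exists c, C c.
Proof.
  intros hbr hh. apply NNPP; intro ne. apply ne. exists h.
  apply (branch_mem hbr hh). intros c hc. exfalso; eauto.
Qed.

Lemma K1B C c G : is_branch H C -> C c -> gamma G -> impl G c ->
  exists r, is_max G r /\ lt G c r /\ C r /\ Bset C r /\ sp r.
Proof using HT HC HB.
  intros hbr hc hG hi. destruct (K1 hbr hc hG hi) as [r [hr [l Cr]]].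
  pose proof (max_supp hG hr) as rs.
  exists r. split; auto. split; auto. split; auto. split; auto.
  exists r. split; auto. split; auto. apply t_le_refl. apply (supp_nodes rs).
Qed.

Lemma Bbranch C : is_branch H C -> (exists h, nodes H h) -> is_branch T (Bset C).
Proof using HT HC HB.
  intros hbr [h hh].
  assert (chB : is_chain T (Bset C)).
  { split.
    - intros t [c [_ [_ l]]]. apply (t_le_nodes_l HT l).
    - intros a b [c [hc [hs l]]] [c' [hc' [hs' l']]].
      destruct (br_cmp hbr hc hc') as [e|[l2|l2]].
      + subst. apply (t_lepred HT l l').
      + apply (t_lepred HT (t_le_le HT l (t_le_of_lt (sp_sp_lt hs hs' l2))) l').
      + apply (t_lepred HT l (t_le_le HT l' (t_le_of_lt (sp_sp_lt hs' hs l2)))). }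
  split; auto.
  intros C2 [hn2 hc2] hsub d hd.
  apply NNPP; intro nBd.
  assert (ubd : forall b, Bset C b -> lt T b d).
  { intros b hb. destruct (hc2 b d (hsub b hb) hd) as [e|[l|l]].
    - subst; contradiction.
    - auto.
    - exfalso; apply nBd. apply (Bdown hb l). }
  destruct (lsub (fun s t hb l => Bdown hb l) (hn2 d hd) ubd) as [t0 [ht0 [ub0 pr0]]].
  assert (nB0 : ~ Bset C t0) by (intro hb; apply (t_irr HT (ub0 t0 hb))).
  destruct (classic (sp t0)) as [s0|ns0].
  - apply nB0. exists t0. split; [|split; auto; apply t_le_refl; auto].
    apply (branch_mem hbr (hnode_supp s0)). intros z hz. right; left.
    destruct (hnode_cases (br_nodes hbr hz)) as [zs|[G [hG hiz]]].
    + apply mk_supp1; auto. apply ub0. exists z. split; auto. split; auto.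
      apply t_le_refl. apply (supp_nodes zs).
    + destruct (K1B hbr hz hG hiz) as [r [hr [l [_ [Br _]]]]].
      apply (mk_supp2 hG hiz s0 hr); auto. left. apply ub0; auto.
  - assert (exists G, gamma G /\ expl T G t0) as [G [hG [[z0 [hz0 lz]] nd]]].
    { apply NNPP; intro nx. apply ns0. split; auto. }
    destruct (pr0 z0 lz) as [c [hc [hs lc]]].
    assert (exists c', C c' /\ sp c' /\ lt T z0 c') as [c' [hc' [hs' l']]].
    { destruct lc as [lc|[e _]].
      - exists c; auto.
      - subst. apply (K3 hbr hc hG hz0). }
    destruct (down_of_supp hs' hG hz0 l') as [r [hr lr]].
    apply nd. exists r. split; auto. left. apply (t_le_lt HT lr). apply ub0.
    exists c'. split; auto. split; auto. apply t_le_refl. apply (supp_nodes hs').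
Qed.

Lemma H_nonempty x : nodes T x -> exists h, nodes H h.
Proof.
  intros hx. destruct (classic (sp x)) as [s|ns].
  - exists x. apply hnode_supp; auto.
  - assert (exists G, gamma G /\ expl T G x) as [G [hG [[z0 [hz0 lz]] nd]]].
    { apply NNPP; intro nx. apply ns. split; auto. }
    exists z0. apply hnode_supp. apply (root_supp hG hz0).
Qed.


Lemma up_kind E a n : gamma E -> lt E a n -> impl E n \/ is_max E n.
Proof.
  intros hE l. destruct (classic (is_max E n)); auto. left.
  split; [apply (t_nodes (gtree hE) l)|]. split; auto.
  intro hl. apply (least_not_above (gtree hE) hl l).
Qed.
Lemma mid_impl E a y s : gamma E -> lt E a y -> lt E y s -> impl E y.
Proof.
  intros hE l1 l2. split; [apply (t_nodes (gtree hE) l1)|]. split.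
  - intro hl. apply (least_not_above (gtree hE) hl l1).
  - intro hm. apply (max_not_lt hm l2).
Qed.

Lemma SonImpl1 E x s : gamma E -> impl E x -> is_son E x s -> (impl E s \/ is_max E s) ->
  is_son H x s.
Proof.
  intros hE hx [lxs nint] hs.
  destruct (groot hE) as [zE [hzE _]].
  split; [apply (g_to_h hE hx lxs hs)|].
  intros y [h1 h2].
  destruct (hlt_r h1) as [ys|[D [hD hiy]]].
  - destruct (CH_supp ys h1) as [[xs _]|[G' [hG' [hx' [r [hr [hl l]]]]]]].
    + apply (impl_not_supp hE hx xs).
    + rewrite (impl_uniq hG' hE hx' hx) in hr, l.
      destruct hs as [si|sm].
      * destruct (CH_impl hE si hzE h2) as [[yi _]|[[_ l2]|[D' [hD' [hi' _]]]]].
        -- apply (impl_not_supp hE yi ys).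
        -- apply (t_irr HT (t_lt_le HT (gmax_above hE hzE hr) (t_le_le HT hl l2))).
        -- apply (impl_not_supp hD' hi' ys).
      * destruct (CH_supp (max_supp hE sm) h2) as [[_ l2]|[G3 [hG3 [hi3 _]]]].
        -- apply (ganti_lt hE hr sm (t_le_lt HT hl l2)).
        -- apply (impl_not_supp hG3 hi3 ys).
  - destruct (groot hD) as [zD [hzD _]].
    destruct (CH_impl hD hiy hzD h1) as [[hx2 l]|[[xs _]|[D' [hD' [hx' [r [hr [hl l]]]]]]]].
    + rewrite (impl_uniq hD hE hx2 hx) in hiy, l.
      destruct hs as [si|sm].
      * apply (nint y). split; auto. apply (hlt_same hE hiy si h2).
      * destruct (CH_supp (max_supp hE sm) h2) as [[ys _]|[G3 [hG3 [hi3 [r3 [hr3 [hl3 l3]]]]]]].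
        -- apply (impl_not_supp hE hiy ys).
        -- rewrite (impl_uniq hG3 hE hi3 hiy) in hr3, l3.
           rewrite (ganti hE hr3 sm hl3) in l3. apply (nint y); auto.
    + apply (impl_not_supp hE hx xs).
    + rewrite (impl_uniq hD' hE hx' hx) in hr, l.
      destruct hs as [si|sm].
      * destruct (CH_impl hE si hzE h2) as [[yi _]|[[ys _]|[D'' [hD'' [hi'' [r2 [hr2 [hl2 l2]]]]]]]].
        -- rewrite (impl_uniq hD hE hiy yi) in hzD.
           apply (t_irr HT (t_lt_le HT (gmax_above hE hzD hr) hl)).
        -- apply (impl_not_supp hD hiy ys).
        -- rewrite (impl_uniq hD'' hD hi'' hiy) in hr2.
           apply (t_irr HT (t_lt_le HT (t_lt_le HT (t_lt_le HT (gmax_above hD hzD hr2) hl2) (t_le_of_lt (gmax_above hE hzE hr))) hl)).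
      * destruct (CH_supp (max_supp hE sm) h2) as [[ys _]|[G3 [hG3 [hi3 [r3 [hr3 [hl3 l3]]]]]]].
        -- apply (impl_not_supp hD hiy ys).
        -- rewrite (impl_uniq hG3 hD hi3 hiy) in hr3.
           apply (ganti_lt hE hr sm). apply (t_le_lt HT hl). apply (t_lt_le HT (gmax_above hD hzD hr3) hl3).
Qed.

Lemma SonImpl2 E x s : gamma E -> impl E x -> is_son H x s ->
  is_son E x s /\ (impl E s \/ is_max E s).
Proof.
  intros hE hx [l nint]. pose proof (gtree hE) as tE.
  destruct (hlt_r l) as [ss|[D [hD his]]].
  - destruct (CH_supp ss l) as [[xs _]|[G' [hG' [hx' [r [hr [hl l2]]]]]]].
    + destruct (impl_not_supp hE hx xs).
    + rewrite (impl_uniq hG' hE hx' hx) in hr, l2.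
      destruct hl as [hl|[e _]].
      * exfalso. apply (nint r). split.
        -- apply (g_to_h hE hx l2); auto.
        -- apply mk_supp1; auto. apply (max_supp hE hr).
      * subst. split; auto. split; auto. intros y [l3 l4].
        apply (nint y). pose proof (mid_impl hE l3 l4) as yi. split.
        -- apply (mk_impl1 hE hx yi l3).
        -- apply (g_to_h hE yi l4); auto.
  - destruct (groot hD) as [zD [hzD _]].
    destruct (CH_impl hD his hzD l) as [[hx2 l2]|[[xs _]|[D' [hD' [hx' [r [hr [hl l2]]]]]]]].
    + rewrite (impl_uniq hD hE hx2 hx) in his, l2.
      split; auto. split; auto. intros y [l3 l4].
      apply (nint y). pose proof (mid_impl hE l3 l4) as yi. split.
      * apply (mk_impl1 hE hx yi l3).
      * apply (mk_impl1 hE yi his l4).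
    + destruct (impl_not_supp hE hx xs).
    + rewrite (impl_uniq hD' hE hx' hx) in hr, l2. exfalso.
      apply (nint r). split.
      * apply (g_to_h hE hx l2); auto.
      * apply (mk_impl2 hD his hzD (max_supp hE hr) hl).
Qed.

Lemma root_cases E x D z y : gamma E -> is_least E x -> gamma D -> is_least D z -> lt T x z ->
  impl D y -> exists rE, is_max E rE /\ le T rE z.
Proof.
  intros hE hx hD hz l hy.
  assert (ne : D <> E).
  { intro e; subst. rewrite (least_uniq (gtree hE) hx hz) in l. apply (t_irr HT l). }
  destruct (consist hD hE ne hz hx) as [[_ [_ [_ c]]]|[[a [ha hl]]|[a [ha hl]]]].
  - destruct (c (t_le_of_lt l)).
  - eauto.
  - exfalso. apply (t_irr HT (t_trans HT (t_lt_le HT (gmax_above hD hz ha) hl) l)).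
Qed.

Lemma SonRoot1 E x s : gamma E -> is_least E x -> is_son E x s -> is_son H x s.
Proof.
  intros hE hx [lxs nint]. pose proof (root_supp hE hx) as xs.
  pose proof (up_kind hE lxs) as hs.
  split.
  - destruct hs as [si|sm].
    + apply (mk_impl2 hE si hx xs). apply t_le_refl. apply (supp_nodes xs).
    + apply mk_supp1; auto. apply (max_supp hE sm). apply (gmax_above hE hx sm).
  - intros y [h1 h2].
    destruct (hlt_r h1) as [ys|[D [hD hiy]]].
    + pose proof (sp_sp_lt xs ys h1) as l.
      destruct hs as [si|sm].
      * destruct (CH_impl hE si hx h2) as [[yi _]|[[_ l2]|[D' [hD' [hi' _]]]]].
        -- apply (impl_not_supp hE yi ys).
        -- apply (t_le_lt_irr HT l2 l).
        -- apply (impl_not_supp hD' hi' ys).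
      * destruct (CH_supp (max_supp hE sm) h2) as [[_ l2]|[G3 [hG3 [hi3 _]]]].
        -- destruct (down_of_supp ys hE hx l) as [r [hr hl]].
           apply (ganti_lt hE hr sm (t_le_lt HT hl l2)).
        -- apply (impl_not_supp hG3 hi3 ys).
    + destruct (groot hD) as [zD [hzD _]].
      destruct (CH_impl hD hiy hzD h1) as [[hx2 _]|[[_ lz]|[D' [hD' [hx' _]]]]].
      * apply (gimpl_notT hD hx2 (supp_nodes xs)).
      * destruct (classic (D = E)) as [e|ne].
        -- subst. pose proof (impl_lt_root hD hx hiy) as lxy.
           destruct hs as [si|sm].
           ++ apply (nint y). split; auto. apply (hlt_same hD hiy si h2).
           ++ destruct (CH_supp (max_supp hD sm) h2) as [[ys _]|[G3 [hG3 [hi3 [r3 [hr3 [hl3 l3]]]]]]].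
              ** apply (impl_not_supp hD hiy ys).
              ** rewrite (impl_uniq hG3 hD hi3 hiy) in hr3, l3.
                 rewrite (ganti hD hr3 sm hl3) in l3. apply (nint y); auto.
        -- assert (lz' : lt T x zD).
           { destruct lz as [lz|[e _]]; auto. subst. destruct (ne (root_uniq hD hE hzD hx)). }
           destruct (root_cases hE hx hD hzD lz' hiy) as [rE [hrE lrE]].
           destruct hs as [si|sm].
           ++ destruct (CH_impl hE si hx h2) as [[yi _]|[[ys _]|[D'' [hD'' [hi'' [r2 [hr2 [hl2 _]]]]]]]].
              ** apply ne. apply (impl_uniq hD hE hiy yi).
              ** apply (impl_not_supp hD hiy ys).
              ** rewrite (impl_uniq hD'' hD hi'' hiy) in hr2.
                 apply (t_irr HT (t_trans HT lz' (t_lt_le HT (gmax_above hD hzD hr2) hl2))).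
           ++ destruct (CH_supp (max_supp hE sm) h2) as [[ys _]|[G3 [hG3 [hi3 [r3 [hr3 [hl3 l3]]]]]]].
              ** apply (impl_not_supp hD hiy ys).
              ** rewrite (impl_uniq hG3 hD hi3 hiy) in hr3.
                 apply (ganti_lt hE hrE sm). apply (t_le_lt HT lrE).
                 apply (t_lt_le HT (gmax_above hD hzD hr3) hl3).
      * apply (gimpl_notT hD' hx' (supp_nodes xs)).
Qed.

Lemma SonRoot2 E x s : gamma E -> is_least E x -> is_son H x s ->
  is_son E x s /\ (impl E s \/ is_max E s).
Proof.
  intros hE hx [l nint]. pose proof (root_supp hE hx) as xs. pose proof (gtree hE) as tE.
  assert (fin : lt E x s -> impl E s \/ is_max E s -> is_son E x s /\ (impl E s \/ is_max E s)).
  { intros l2 hs. split; auto. split; auto. intros y [l3 l4]. apply (nint y).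
    pose proof (mid_impl hE l3 l4) as yi. split.
    - apply (mk_impl2 hE yi hx xs). apply t_le_refl. apply (supp_nodes xs).
    - apply (g_to_h hE yi l4 hs). }
  destruct (hlt_r l) as [ss|[D [hD his]]].
  - pose proof (sp_sp_lt xs ss l) as lt1.
    destruct (down_of_supp ss hE hx lt1) as [r [hr hl]].
    destruct hl as [hl|[e _]].
    + exfalso. apply (nint r). pose proof (max_supp hE hr) as rs. split.
      * apply mk_supp1; auto. apply (gmax_above hE hx hr).
      * apply mk_supp1; auto.
    + subst. apply fin; [|right; auto]. apply (least_lt hx (proj1 hr)). intro e; subst.
      apply (t_irr HT lt1).
  - destruct (groot hD) as [zD [hzD _]].
    destruct (CH_impl hD his hzD l) as [[hx2 _]|[[_ lz]|[D' [hD' [hx' _]]]]].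
    + destruct (gimpl_notT hD hx2 (supp_nodes xs)).
    + destruct (classic (D = E)) as [e|ne].
      * subst. apply fin; [apply (impl_lt_root hD hx his)|left; auto].
      * assert (lz' : lt T x zD).
        { destruct lz as [lz|[e _]]; auto. subst. destruct (ne (root_uniq hD hE hzD hx)). }
        destruct (root_cases hE hx hD hzD lz' his) as [rE [hrE lrE]].
        exfalso. apply (nint rE). pose proof (max_supp hE hrE) as rs. split.
        -- apply mk_supp1; auto. apply (gmax_above hE hx hrE).
        -- apply (mk_impl2 hD his hzD rs lrE).
    + destruct (gimpl_notT hD' hx' (supp_nodes xs)).
Qed.

Lemma SonPlain1 x s : sp x -> (forall E, gamma E -> ~ is_least E x) -> is_son T x s ->
  is_son H x s /\ sp s.
Proof.
  intros xs nr [l nint].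
  assert (ss : sp s).
  { split; [apply (t_nodes HT l)|]. intros [G [hG [[z [hz lz]] nd]]].
    destruct (t_pred HT lz l) as [e|[l2|l2]].
    - subst. apply (nr G hG hz).
    - destruct (down_of_supp xs hG hz l2) as [r [hr hl]]. apply nd. exists r.
      split; auto. left. apply (t_le_lt HT hl l).
    - apply (nint z). auto. }
  split; auto. split; [apply mk_supp1; auto|].
  intros y [h1 h2].
  destruct (hlt_r h1) as [ys|[D [hD hiy]]].
  - apply (nint y). split; [apply (sp_sp_lt xs ys h1)|apply (sp_sp_lt ys ss h2)].
  - destruct (groot hD) as [zD [hzD _]].
    destruct (CH_impl hD hiy hzD h1) as [[hx2 _]|[[_ lz]|[D' [hD' [hx' _]]]]].
    + apply (gimpl_notT hD hx2 (supp_nodes xs)).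
    + assert (lz' : lt T x zD).
      { destruct lz as [lz|[e _]]; auto. subst. destruct (nr D hD hzD). }
      destruct (CH_supp ss h2) as [[ys _]|[G3 [hG3 [hi3 [r3 [hr3 [hl3 _]]]]]]].
      * apply (impl_not_supp hD hiy ys).
      * rewrite (impl_uniq hG3 hD hi3 hiy) in hr3.
        apply (nint zD). split; auto. apply (t_lt_le HT (gmax_above hD hzD hr3) hl3).
    + apply (gimpl_notT hD' hx' (supp_nodes xs)).
Qed.

Lemma SonPlain2 x s : sp x -> (forall E, gamma E -> ~ is_least E x) -> is_son H x s ->
  is_son T x s /\ sp s.
Proof.
  intros xs nr [l nint].
  destruct (hlt_r l) as [ss|[D [hD his]]].
  - split; auto. split; [apply (sp_sp_lt xs ss l)|].
    intros y [l1 l2].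
    destruct (classic (sp y)) as [ys|nys].
    + apply (nint y). split; apply mk_supp1; auto.
    + assert (exists G, gamma G /\ expl T G y) as [G [hG [[z [hz lz]] nd]]].
      { apply NNPP; intro nx. apply nys. split; [apply (t_nodes HT l1)|auto]. }
      destruct (t_pred HT lz l1) as [e|[l3|l3]].
      * subst. apply (nr G hG hz).
      * destruct (down_of_supp xs hG hz l3) as [r [hr hl]]. apply nd. exists r.
        split; auto. left. apply (t_le_lt HT hl l1).
      * apply (nint z). pose proof (root_supp hG hz) as zs. split; apply mk_supp1; auto.
        apply (t_trans HT lz l2).
  - exfalso. destruct (groot hD) as [zD [hzD _]].
    destruct (CH_impl hD his hzD l) as [[hx2 _]|[[_ lz]|[D' [hD' [hx' _]]]]].
    + apply (gimpl_notT hD hx2 (supp_nodes xs)).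
    + assert (lz' : lt T x zD).
      { destruct lz as [lz|[e _]]; auto. subst. destruct (nr D hD hzD). }
      pose proof (root_supp hD hzD) as zs.
      apply (nint zD). split; [apply mk_supp1; auto|].
      apply (mk_impl2 hD his hzD zs). apply t_le_refl. apply (supp_nodes zs).
    + apply (gimpl_notT hD' hx' (supp_nodes xs)).
Qed.

Lemma nonmax_plain x : sp x -> (forall E, gamma E -> ~ is_least E x) -> ~ is_max H x ->
  ~ is_max T x.
Proof.
  intros xs nr nm [_ hm]. apply nm. split; [apply hnode_supp; auto|].
  intros y l. destruct (hlt_r l) as [ys|[D [hD hiy]]].
  - apply (hm y (sp_sp_lt xs ys l)).
  - destruct (groot hD) as [zD [hzD _]].
    destruct (CH_impl hD hiy hzD l) as [[hx2 _]|[[_ lz]|[D' [hD' [hx' _]]]]].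
    + apply (gimpl_notT hD hx2 (supp_nodes xs)).
    + destruct lz as [lz|[e _]].
      * apply (hm zD lz).
      * subst. apply (nr D hD hzD).
    + apply (gimpl_notT hD' hx' (supp_nodes xs)).
Qed.

End Hyb.


Unset Default Proof Using.
Section Fol.
Variables U P : Type.
Variable F : ftree U P.
Variable phi : ftree U P -> Prop.
Hypothesis HT : is_tree (skel F).
Hypothesis HFn : nonincreasing F.
Hypothesis Hphi : consistent_fgrafts F phi.

Notation T := (skel F).
Notation gamma := (skels phi).
Notation H := (hybr (skel F) (skels phi)).
Notation hlt := (lt (hybr (skel F) (skels phi))).
Notation sp := (supp (skel F) (skels phi)).
Notation leafH := (leaf (fhybr F phi)).

Lemma HC : consistent_grafts T gamma.
Proof. apply Hphi. Qed.
Lemma fg G : phi G -> is_fgraft F G.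
Proof. destruct Hphi as [h _]; auto. Qed.
Lemma gam_of G : phi G -> gamma (skel G).
Proof. intros h. exists G; auto. Qed.
Lemma phi_uniq G1 G2 : phi G1 -> phi G2 -> skel G1 = skel G2 -> G1 = G2.
Proof.
  intros h1 h2 e. apply NNPP; intro ne. destruct Hphi as [_ [h _]]. apply (h G1 G2 h1 h2 ne e).
Qed.
Lemma G_noninc G a b p : phi G -> le (skel G) a b -> leaf G b p -> leaf G a p.
Proof. intros h l. destruct (fg h) as [_ [hn _]]. apply (hn a b l). Qed.
Lemma G_root G z p : phi G -> is_least (skel G) z -> leaf G z p -> leaf F z p.
Proof. intros h hz. destruct (fg h) as [_ [_ [_ [hh _]]]]. apply (hh z hz). Qed.
Lemma G_max G r p : phi G -> is_max (skel G) r -> (leaf G r p <-> leaf F r p).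
Proof. intros h hr. destruct (fg h) as [_ [_ [_ [_ hh]]]]. apply (hh r hr). Qed.
Lemma F_le a b p : le T a b -> leaf F b p -> leaf F a p.
Proof. intros l. apply (HFn l). Qed.

Lemma leafH_supp x p : sp x -> (leafH x p <-> leaf F x p /\ ~ loss F phi p).
Proof.
  intros xs. simpl. split.
  - intros [[[G [hG [hi _]]]|[_ h]] hl]; auto.
    destruct (impl_not_supp HT HC (gam_of hG) hi xs).
  - intros [h hl]. split; auto.
Qed.
Lemma leafH_impl G x p : phi G -> impl (skel G) x -> (leafH x p <-> leaf G x p /\ ~ loss F phi p).
Proof.
  intros hG hi. simpl. split.
  - intros [[[G' [hG' [hi' h]]]|[xs _]] hl].
    + rewrite (phi_uniq hG' hG (impl_uniq HT HC (gam_of hG') (gam_of hG) hi' hi)) in h. auto.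
    + destruct (impl_not_supp HT HC (gam_of hG) hi xs).
  - intros [h hl]. split; eauto.
Qed.
Lemma root_of_impl G y z p : phi G -> impl (skel G) y -> is_least (skel G) z -> leaf G y p -> leaf F z p.
Proof.
  intros hG hy hz h. apply (G_root hG hz). apply (G_noninc hG (least_le hz (impl_nodesG HT HC hy)) h).
Qed.

Lemma partA : nonincreasing (fhybr F phi).
Proof.
  intros x y hle p hy. destruct hle as [l|[e _]]; [|subst; auto].
  change (lt H x y) in l.
  destruct (hlt_r HT HC l) as [ys|[E [[G [hG e]] hiy]]].
  - destruct (proj1 (leafH_supp p ys) hy) as [fy nl]. clear hy. rename fy into hy.
    destruct (CH_supp HT HC ys l) as [[xs l2]|[E [[G [hG e]] [hi [r [hr [hl l2]]]]]]].
    + apply (leafH_supp p xs). split; auto. apply (F_le (t_le_of_lt l2) hy).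
    + subst E. apply (leafH_impl p hG hi). split; auto.
      apply (G_noninc hG (t_le_of_lt l2)). apply (G_max p hG hr). apply (F_le hl hy).
  - subst E. destruct (proj1 (leafH_impl p hG hiy) hy) as [fy nl]. clear hy. rename fy into hy.
    destruct (groot HT HC (gam_of hG)) as [z [hz _]].
    pose proof (root_of_impl hG hiy hz hy) as fz.
    destruct (CH_impl HT HC (gam_of hG) hiy hz l) as [[hi l2]|[[xs l2]|[D [[G' [hG' e]] [hi [r [hr [hl l2]]]]]]]].
    + apply (leafH_impl p hG hi). split; auto. apply (G_noninc hG (t_le_of_lt l2) hy).
    + apply (leafH_supp p xs). split; auto. apply (F_le l2 fz).
    + subst D. apply (leafH_impl p hG' hi). split; auto.
      apply (G_noninc hG' (t_le_of_lt l2)). apply (G_max p hG' hr). apply (F_le hl fz).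
Qed.


Lemma kindleaf1 G s p : phi G -> (impl (skel G) s \/ is_max (skel G) s) -> leafH s p -> leaf G s p.
Proof.
  intros hG [hi|hm] h.
  - apply (proj1 (leafH_impl p hG hi) h).
  - pose proof (max_supp HT HC (gam_of hG) hm) as ss. apply (G_max p hG hm).
    apply (proj1 (leafH_supp p ss) h).
Qed.
Lemma kindleaf2 G s p : phi G -> (impl (skel G) s \/ is_max (skel G) s) -> leaf G s p ->
  ~ loss F phi p -> leafH s p.
Proof.
  intros hG [hi|hm] h nl.
  - apply (proj2 (leafH_impl p hG hi)); auto.
  - pose proof (max_supp HT HC (gam_of hG) hm) as ss. apply (proj2 (leafH_supp p ss)). split; auto.
    apply (G_max p hG hm); auto.
Qed.

Lemma below_max G x r p : phi G -> splittable G -> impl (skel G) x -> leaf G x p ->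
  is_max (skel G) r -> leaf F r p -> lt (skel G) x r.
Proof.
  intros hG sG hx lx hr lr. apply NNPP; intro nl.
  apply (sG x r) with p; [|split; auto; apply (G_max p hG hr); auto].
  destruct hx as [nx [_ nmx]]. split; auto. split; [apply (proj1 hr)|]. split.
  - intros [l|[e _]]; auto. subst; auto.
  - intros [l|[e _]]. apply (max_not_lt hr l). subst; auto.
Qed.

Lemma F_cmp a b p : splittable F -> nodes T a -> nodes T b -> leaf F a p -> leaf F b p ->
  le T a b \/ le T b a.
Proof.
  intros sF ha hb la lb. apply (comparable_or ha hb). intro hi. apply (sF a b hi p); auto.
Qed.

Lemma split_one G x y p : splittable F -> (forall G, phi G -> splittable G) ->
  phi G -> impl (skel G) x -> sp y -> leafH x p -> leafH y p -> hlt x y \/ hlt y x.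
Proof.
  intros sF sG hG hx ys lx ly.
  destruct (proj1 (leafH_impl p hG hx) lx) as [gx nl].
  destruct (proj1 (leafH_supp p ys) ly) as [fy _].
  destruct (groot HT HC (gam_of hG)) as [z [hz nz]].
  pose proof (root_of_impl hG hx hz gx) as fz.
  destruct (F_cmp sF nz (supp_nodes HT HC ys) fz fy) as [[l|[e _]]|l].
  - left. destruct (down_of_supp HT HC ys (gam_of hG) hz l) as [r [hr hl]].
    apply (mk_supp2 HT HC (gam_of hG) hx ys hr hl). apply (below_max hG (sG G hG) hx gx hr).
    apply (F_le hl fy).
  - subst. right. apply (mk_impl2 HT HC (gam_of hG) hx hz ys). apply t_le_refl; auto.
  - right. apply (mk_impl2 HT HC (gam_of hG) hx hz ys l).
Qed.

Lemma split_two G G' x y p : splittable F -> (forall G, phi G -> splittable G) ->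
  phi G -> phi G' -> G <> G' -> impl (skel G) x -> impl (skel G') y ->
  leafH x p -> leafH y p -> hlt x y \/ hlt y x.
Proof.
  intros sF sG hG hG' ne hx hy lx ly.
  destruct (proj1 (leafH_impl p hG hx) lx) as [gx nl].
  destruct (proj1 (leafH_impl p hG' hy) ly) as [gy _].
  destruct (groot HT HC (gam_of hG)) as [z [hz nz]].
  destruct (groot HT HC (gam_of hG')) as [z' [hz' nz']].
  pose proof (root_of_impl hG hx hz gx) as fz.
  pose proof (root_of_impl hG' hy hz' gy) as fz'.
  assert (ne' : skel G <> skel G') by (destruct Hphi as [_ [h _]]; auto).
  destruct (consist HT HC (gam_of hG) (gam_of hG') ne' hz hz') as [hi|[[a [ha hl]]|[a [ha hl]]]].
  - exfalso. apply (sF z z' hi p). auto.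
  - right. apply (mk_impl3 HT HC (gam_of hG) hx hz (gam_of hG') hy ha hl).
    apply (below_max hG' (sG G' hG') hy gy ha). apply (F_le hl fz).
  - left. apply (mk_impl3 HT HC (gam_of hG') hy hz' (gam_of hG) hx ha hl).
    apply (below_max hG (sG G hG) hx gx ha). apply (F_le hl fz').
Qed.

Lemma partB : splittable F -> (forall G, phi G -> splittable G) -> splittable (fhybr F phi).
Proof.
  intros sF sG x y [hx [hy [n1 n2]]] p [lx ly].
  change (nodes H x) in hx. change (nodes H y) in hy.
  change (~ le H x y) in n1. change (~ le H y x) in n2.
  assert (cx : ~ hlt x y) by (intro l; apply n1; left; auto).
  assert (cy : ~ hlt y x) by (intro l; apply n2; left; auto).
  destruct (hnode_cases HT HC hx) as [xs|[E [[G [hG e]] hix]]];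
  destruct (hnode_cases HT HC hy) as [ys|[E' [[G' [hG' e']] hiy]]]; try subst E; try subst E'.
  - apply (sF x y) with p; [|split; [apply (proj1 (leafH_supp p xs) lx)|apply (proj1 (leafH_supp p ys) ly)]].
    split; [apply (supp_nodes HT HC xs)|]. split; [apply (supp_nodes HT HC ys)|]. split.
    + intros [l|[e _]]. apply cx. apply (mk_supp1 HT HC); auto. subst. apply n1. right; auto.
    + intros [l|[e _]]. apply cy. apply (mk_supp1 HT HC); auto. subst. apply n1. right; auto.
  - destruct (split_one sF sG hG' hiy xs ly lx); auto.
  - destruct (split_one sF sG hG hix ys lx ly); auto.
  - destruct (classic (G = G')) as [e|ne].
    + subst G'. apply (sG G hG x y) with p; [|split; [apply (proj1 (leafH_impl p hG hix) lx)|apply (proj1 (leafH_impl p hG hiy) ly)]].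
      split; [apply (impl_nodesG HT HC hix)|]. split; [apply (impl_nodesG HT HC hiy)|]. split.
      * intros [l|[e _]]. apply cx. apply (mk_impl1 HT HC (gam_of hG) hix hiy l). subst. apply n1. right; auto.
      * intros [l|[e _]]. apply cy. apply (mk_impl1 HT HC (gam_of hG) hiy hix l). subst. apply n1. right; auto.
    + destruct (split_two sF sG hG hG' ne hix hiy lx ly); auto.
Qed.

Lemma partE : forall opens : (P -> Prop) -> Prop, is_topology opens ->
  open_in opens F -> (forall G, phi G -> open_in opens G) ->
  open_in_subspace opens (loss F phi) (fhybr F phi).
Proof.
  intros opens _ oF oG x hx. change (nodes H x) in hx.
  destruct (hnode_cases HT HC hx) as [xs|[E [[G [hG e]] hix]]].
  - exists (leaf F x). split; [apply oF; apply (supp_nodes HT HC xs)|]. intros p. apply (leafH_supp p xs).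
  - subst E. exists (leaf G x). split; [apply (oG G hG); apply (impl_nodesG HT HC hix)|].
    intros p. apply (leafH_impl p hG hix).
Qed.

Lemma partC : locally_strict F -> (forall G, phi G -> locally_strict G) ->
  locally_strict (fhybr F phi).
Proof.
  intros lF lG x hx nm. change (nodes H x) in hx. change (~ is_max H x) in nm.
  assert (back : forall p, (exists s, is_son H x s /\ leafH s p) -> leafH x p).
  { intros p [s [[ls _] hsp]]. apply (partA (x := x) (y := s)); auto. left; auto. }
  destruct (hnode_cases HT HC hx) as [xs|[E [[G [hG e]] hix]]].
  - destruct (classic (exists E, gamma E /\ is_least E x)) as [[E [[G [hG e]] hzx]]|nr].
    + subst E. assert (nmG : ~ is_max (skel G) x).
      { destruct (gother HT HC (gam_of hG) hzx) as [n ln]. intros hm. apply (max_not_lt hm ln). }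
      destruct (lG G hG x (proj1 hzx) nmG) as [lu ld]. split.
      * intros p. split; [|apply back].
        intros hxp. destruct (proj1 (leafH_supp p xs) hxp) as [fx nl].
        assert (gx : leaf G x p).
        { apply NNPP; intro ng. apply nl. exists G. split; auto. exists x; auto. }
        destruct (proj1 (lu p) gx) as [s [hs gs]].
        pose proof (up_kind HT HC (gam_of hG) (proj1 hs)) as ks.
        exists s. split; [apply (SonRoot1 HT HC (gam_of hG) hzx hs)|].
        apply (kindleaf2 hG ks gs nl).
      * intros s s' hs hs' ne p [h1 h2].
        destruct (SonRoot2 HT HC (gam_of hG) hzx hs) as [ss ks].
        destruct (SonRoot2 HT HC (gam_of hG) hzx hs') as [ss' ks'].
        apply (ld s s' ss ss' ne p). split; [apply (kindleaf1 hG ks h1)|apply (kindleaf1 hG ks' h2)].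
    + assert (nr' : forall E, gamma E -> ~ is_least E x) by (intros E hE hl; apply nr; eauto).
      destruct (lF x (supp_nodes HT HC xs) (nonmax_plain HT HC xs nr' nm)) as [lu ld]. split.
      * intros p. split; [|apply back].
        intros hxp. destruct (proj1 (leafH_supp p xs) hxp) as [fx nl].
        destruct (proj1 (lu p) fx) as [s [hs fs]].
        destruct (SonPlain1 HT HC xs nr' hs) as [hs2 ss].
        exists s. split; auto. apply (proj2 (leafH_supp p ss)); auto.
      * intros s s' hs hs' ne p [h1 h2].
        destruct (SonPlain2 HT HC xs nr' hs) as [st ss].
        destruct (SonPlain2 HT HC xs nr' hs') as [st' ss'].
        apply (ld s s' st st' ne p). split; [apply (proj1 (leafH_supp p ss) h1)|apply (proj1 (leafH_supp p ss') h2)].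
  - subst E. assert (nmG : ~ is_max (skel G) x) by (destruct hix as [_ [_ h]]; auto).
    destruct (lG G hG x (impl_nodesG HT HC hix) nmG) as [lu ld]. split.
    + intros p. split; [|apply back].
      intros hxp. destruct (proj1 (leafH_impl p hG hix) hxp) as [gx nl].
      destruct (proj1 (lu p) gx) as [s [hs gs]].
      pose proof (up_kind HT HC (gam_of hG) (proj1 hs)) as ks.
      exists s. split; [apply (SonImpl1 HT HC (gam_of hG) hix hs ks)|].
      apply (kindleaf2 hG ks gs nl).
    + intros s s' hs hs' ne p [h1 h2].
      destruct (SonImpl2 HT HC (gam_of hG) hix hs) as [ss ks].
      destruct (SonImpl2 HT HC (gam_of hG) hix hs') as [ss' ks'].
      apply (ld s s' ss ss' ne p). split; [apply (kindleaf1 hG ks h1)|apply (kindleaf1 hG ks' h2)].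
Qed.


Lemma le_tri (G : tree U) a b : is_tree G -> le G a b \/ le G b a -> a = b \/ lt G a b \/ lt G b a.
Proof. intros _ [[l|[e _]]|[l|[e _]]]; auto. Qed.

Lemma fruitD C p : splittable F -> (forall E, gamma E -> bounded_chains E) ->
  is_branch H C -> (exists h, nodes H h) ->
  (forall b, Bset T gamma C b -> leaf F b p) -> fruit (fhybr F phi) C p.
Proof.
  intros sF HB hC hne hp.
  pose proof (Bbranch HT HC HB hC hne) as hB.
  assert (nl : ~ loss F phi p).
  { intros [G [hG [z [hz [fz ngz]]]]].
    assert (Bz : Bset T gamma C z).
    { destruct hB as [[bn bc] bmax]. apply (bmax (fun t => Bset T gamma C t \/ t = z)).
      - split.
        + intros c [hc|e]; [auto|subst; apply (groot_T HT HC (gam_of hG) hz)].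
        + intros a b [ha|ea] [hb|eb]; subst; auto.
          * apply le_tri; auto. apply (F_cmp sF (bn a ha) (groot_T HT HC (gam_of hG) hz) (hp a ha) fz).
          * apply le_tri; auto. apply (F_cmp sF (groot_T HT HC (gam_of hG) hz) (bn b hb) fz (hp b hb)).
      - intros c hc; left; auto.
      - right; auto. }
    destruct Bz as [c [hc [cs lc]]].
    assert (exists c', C c' /\ sp c' /\ lt T z c') as [c' [hc' [cs' l']]].
    { destruct lc as [lc|[e _]].
      - exists c; auto.
      - subst. apply (K3 HT HC HB hC hc (gam_of hG) hz). }
    destruct (down_of_supp HT HC cs' (gam_of hG) hz l') as [r [hr hl]].
    apply ngz. apply (G_noninc hG (least_le hz (proj1 hr))). apply (G_max p hG hr).
    apply hp. exists c'. split; auto. }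
  intros c hc. destruct (hnode_cases HT HC (br_nodes HT HC hC hc)) as [cs|[E [[G [hG e]] hic]]].
  - apply (proj2 (leafH_supp p cs)). split; auto. apply hp. exists c. split; auto. split; auto.
    apply t_le_refl. apply (supp_nodes HT HC cs).
  - subst E. destruct (K1B HT HC HB hC hc (gam_of hG) hic) as [r [hr [l [_ [Br _]]]]].
    apply (proj2 (leafH_impl p hG hic)). split; auto.
    apply (G_noninc hG (t_le_of_lt l)). apply (G_max p hG hr). apply hp; auto.
Qed.

Lemma partD1 : complete F -> splittable F -> (forall G, phi G -> bounded_chains (skel G)) ->
  complete (fhybr F phi).
Proof.
  intros [[x0 hx0] cF] sF bc.
  assert (HB : forall E, gamma E -> bounded_chains E) by (intros E [G [hG e]]; subst; auto).
  pose proof (H_nonempty HT HC hx0) as hne.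
  split; [exact hne|].
  intros C hC. destruct (cF _ (Bbranch HT HC HB hC hne)) as [p hp].
  exists p. apply (fruitD sF HB hC hne hp).
Qed.

Lemma partD2 : strict_branches F -> splittable F -> (forall G, phi G -> bounded_chains (skel G)) ->
  strict_branches (fhybr F phi).
Proof.
  intros [[x0 hx0] cF] sF bc.
  assert (HB : forall E, gamma E -> bounded_chains E) by (intros E [G [hG e]]; subst; auto).
  pose proof (H_nonempty HT HC hx0) as hne.
  split; [exact hne|].
  intros C hC. destruct (cF _ (Bbranch HT HC HB hC hne)) as [p hp].
  exists p. intros q. split.
  - intros hq. apply (proj1 (hp q)). intros b [c [hc [cs lc]]].
    apply (F_le lc). apply (proj1 (leafH_supp q cs) (hq c hc)).
  - intros e; subst. apply (fruitD sF HB hC hne (proj2 (hp p) eq_refl)).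
Qed.

End Fol.

Unset Implicit Arguments.
Set Strict Implicit.

Theorem mainTheorem10 (U P : Type) (F : ftree U P) (phi : ftree U P -> Prop)
  (HFtree : is_tree (skel F)) (HFnoninc : nonincreasing F)
  (Hphi : consistent_fgrafts F phi) :
  let H := fhybr F phi in
  (* (a) *) nonincreasing H /\
  (* (b) *) (splittable F -> (forall G, phi G -> splittable G) -> splittable H) /\
  (* (c) *) (locally_strict F -> (forall G, phi G -> locally_strict G) ->
             locally_strict H) /\
  (* (d) *) ((complete F -> splittable F ->
              (forall G, phi G -> bounded_chains (skel G)) -> complete H) /\
             (strict_branches F -> splittable F ->
              (forall G, phi G -> bounded_chains (skel G)) -> strict_branches H)) /\
  (* (e) *) (forall opens : (P -> Prop) -> Prop, is_topology opens ->
             open_in opens F -> (forall G, phi G -> open_in opens G) ->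
             open_in_subspace opens (loss F phi) H).
Proof.
  intros H. split; [apply partA; auto|].
  split; [apply partB; auto|].
  split; [apply partC; auto|].
  split; [split; [apply partD1; auto|apply partD2; auto]|].
  apply partE; auto.
Qed.
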